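(* Let $\ell$ be a positive odd integer, $p$ an odd prime, and $n$ a positive integer with $p^2\mid\Omega_\ell(n)$. Suppose there exist a divisor $d_1$ of $\ell$ and an integer $a$ with $2\le a\le n$ such that $p\,\|\,a^{d_1}+1$ (i.e. $p\mid a^{d_1}+1$ and $p^2\nmid a^{d_1}+1$), and suppose that $p\nmid b^{\gcd(\ell,p-1)}+1$ for every integer $b$ with $2\le b\le n$, $b\ne a$. Then $p\mid \ell$.
   Context: $\Omega_\ell(n)=\prod_{a=1}^{n}(a^\ell+1)$. *)

(* Defs.v *)
From mathcomp Require Import all_boot.
Set Implicit Arguments. Unset Strict Implicit. Unset Printing Implicit Defensive.

Definition Omega (l n : nat) : nat := \prod_(1 <= a < n.+1) (a ^ l + 1).

(* Main.v *)
Require Import Defs.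
From mathcomp Require Import all_boot.
From mathcomp Require Import all_algebra all_field.
Import GRing.Theory.

Lemma gcd_exp1 (F : fieldType) (y : F) e1 e2 : 0 < e1 ->
  (y ^+ e1 = 1 -> y ^+ e2 = 1 -> y ^+ (gcdn e1 e2) = 1)%R.
Proof.
move=> e1p h1 h2; case: (egcdnP e2 e1p) => km kn E _.
have : (y ^+ (km * e1) = y ^+ (kn * e2 + gcdn e1 e2))%R by rewrite E.
by rewrite exprD !(mulnC _ e1) !(mulnC _ e2) !exprM h1 h2 !expr1n mul1r => <-.
Qed.

Lemma not_p2 {p} : prime p -> odd p -> ~~ (p %| 2).
Proof.
move=> pr op; rewrite dvdn_prime2 //; apply/eqP=> E; by rewrite E in op.
Qed.

Lemma step1 (l p b : nat) : odd l -> 0 < l -> prime p -> odd p ->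
  p %| b ^ l + 1 -> p %| b ^ (gcdn l (p - 1)) + 1.
Proof.
move=> ol l0 pr op H.
have ch := pchar_Fp pr.
set y : 'F_p := (b%:R)%R.
move: H; rewrite !(dvdn_pcharf ch) !natrD !natrX -/y => /eqP H.
have Hl : (y ^+ l = -1)%R by apply/eqP; rewrite -addr_eq0 H.
have yn0 : (y != 0)%R.
  apply/eqP=> y0; move: H; rewrite y0 expr0n eqn0Ngt l0 /= add0r.
  by move/eqP; rewrite oner_eq0.
have Hf : (y ^+ (p - 1) = 1)%R.
  have := expf_card y; rewrite card_Fp //.
  have p1 : p = (p - 1).+1 by rewrite subn1 prednK // prime_gt0.
  move=> e; have : (y ^+ (p - 1).+1 = y)%R by rewrite -p1.
  rewrite exprS => E; apply: (mulfI yn0); by rewrite E mulr1.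
have H2l : (y ^+ (2 * l) = 1)%R by rewrite mulnC exprM Hl sqrrN expr1n.
have Hg := @gcd_exp1 _ y (2 * l) (p - 1) ltac:(by rewrite muln_gt0 l0) H2l Hf.
set g := gcdn l (p - 1).
have dv : gcdn (2 * l) (p - 1) %| 2 * g.
  rewrite /g muln_gcdr dvdn_gcd dvdn_gcdl /=.
  exact: dvdn_trans (dvdn_gcdr _ _) (dvdn_mull _ (dvdnn _)).
have Hz : ((y ^+ g) ^+ 2 = 1)%R.
  rewrite -exprM mulnC -(divnK dv) mulnC exprM Hg expr1n //.
have : ((y ^+ g - 1) * (y ^+ g + 1) == 0)%R.
  by rewrite -subr_sqr Hz expr1n subrr.
rewrite mulf_eq0 => /orP [/eqP E|E].
  have : (y ^+ l = 1)%R.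
    have gl : g %| l by apply: dvdn_gcdl.
    rewrite -(divnK gl) mulnC exprM.
    by move/eqP: E; rewrite subr_eq0 => /eqP ->; rewrite expr1n.
  rewrite Hl => E2; have : ((2%:R : 'F_p) == 0)%R by rewrite mulr2n -{1}E2 addNr.
  by rewrite -(dvdn_pcharf ch) (negbTE (not_p2 pr op)).
by [].
Qed.

Theorem lemma6 (l p n : nat) :
  0 < l -> odd l -> prime p -> odd p -> 0 < n ->
  p ^ 2 %| Omega l n ->
  (exists d1 a : nat,
      [/\ d1 %| l, 2 <= a <= n, p %| a ^ d1 + 1 & ~~ (p ^ 2 %| a ^ d1 + 1)]
      /\ (forall b : nat, 2 <= b <= n -> b != a -> ~~ (p %| b ^ gcdn l (p - 1) + 1))) ->
  p %| l.
Proof.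
move=> l0 ol pr op n0 HO [d1 [a [[Hd1 Ha Hp1 Hp2] Hb]]].
have p0 := prime_gt0 pr.
have HA : p ^ 2 %| a ^ l + 1.
  move: HO; rewrite /Omega.
  have ain : a \in index_iota 1 n.+1.
    rewrite mem_index_iota; case/andP: Ha => a2 an; apply/andP; split.
      exact: leq_trans a2. by rewrite ltnS.
  rewrite (bigD1_seq a ain (iota_uniq _ _)) /= Gauss_dvdl //.
  rewrite coprime_pexpl // prime_coprime // Euclid_dvd_prod // big_has_cond.
  apply/hasPn => i; rewrite mem_index_iota => /andP [i1 iN] /=.
  apply/negP => /andP [ia pi].
  case: (ltngtP i 1) => [|i1'|ie].
  - by rewrite ltnNge i1.
  - have Hi : 2 <= i <= n by rewrite i1' /= -ltnS.
    by move/negP: (Hb i Hi ia); apply; apply: step1.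
  - by move: pi; rewrite ie exp1n (negbTE (not_p2 pr op)).
set m := l %/ d1.
have lE : l = d1 * m by rewrite /m mulnC divnK.
have om : odd m by move: ol; rewrite lE oddM => /andP [].
set x := a ^ d1.
have HA' : p ^ 2 %| x ^ m + 1 by rewrite /x -expnM -lE.
set X : int := Posz x.
set S : int := (\sum_(i < m) X ^+ (m.-1 - i) * (-1) ^+ i)%R.
have ES : (X ^+ m + 1 = (X + 1) * S)%R.
  have := subrXX X (-1) m; rewrite -signr_odd om expr1 !opprK => ->.
  by [].
have EN : x ^ m + 1 = (x + 1) * `|S|%N.
  have := congr1 absz ES; rewrite abszM.
  have -> : (X ^+ m + 1)%R = Posz (x ^ m + 1).
    by rewrite PoszD -!natz natrX /X natz.
  have -> : (X + 1)%R = Posz (x + 1) by rewrite PoszD.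
  by [].
have pS : p %| `|S|%N.
  set k := (x + 1) %/ p.
  have xk : x + 1 = k * p by rewrite /k divnK.
  have pk : ~~ (p %| k).
    apply/negP => /dvdnP [c kc]; move/negP: Hp2; apply.
    by rewrite -/x xk kc -mulnA; apply: dvdn_mull; rewrite expnS expn1.
  move: HA'; rewrite EN xk expnS expn1 (mulnC k) -mulnA dvdn_pmul2l //.
  by rewrite Euclid_dvdM // (negbTE pk).
have ch := pchar_Fp pr.
have S0 : (((S%:~R)%R : 'F_p) = 0)%R.
  rewrite [S]intEsign rmorphM /= -[((Posz `|S|%N)%:~R)%R]/((`|S|%N)%:R)%R.
  by move: pS; rewrite (dvdn_pcharf ch) => /eqP ->; rewrite mulr0.
have Xm1 : (((X%:~R)%R : 'F_p) = -1)%R.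
  apply/eqP; rewrite -addr_eq0 -[(X%:~R)%R]/((x%:R)%R : 'F_p) -(natrD _ x 1).
  by rewrite -(dvdn_pcharf ch).
have Sm : (((S%:~R)%R : 'F_p) = m%:R)%R.
  rewrite /S rmorph_sum /=.
  transitivity (\sum_(i < m) (1 : 'F_p))%R; last by rewrite sumr_const card_ord.
  apply: eq_bigr => i _; rewrite rmorphM rmorphXn rmorphXn /= Xm1 rmorphN rmorph1.
  rewrite -exprD subnK; last by rewrite -ltnS prednK // (leq_ltn_trans _ (ltn_ord i)).
  rewrite -signr_odd.
  have m0 : 0 < m by rewrite lt0n; apply/eqP=> m0; rewrite m0 in om.
  have : odd m.-1 = false by move: om; rewrite -{1}(prednK m0) /= => /negbTE.
  by move=> ->.
have pm : p %| m by rewrite (dvdn_pcharf ch) -Sm S0.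
by rewrite lE; apply: dvdn_mull.
Qed.
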